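(* Let $\beta>0$ and let $N$ be a nonnegative integer random variable with $P(N\ge n)=1-e^{-\beta/n}$ for all integers $n\ge1$. Consider the one-dimensional oriented percolation with random range with $p=1$ (every bond of $G_{\mathbf N}$ is open). Then $\theta(1,0)=P(0\to\infty)=0$ if $\beta<1$, and $\theta(1,0)>0$ if $\beta>1$.
   Context: One-dimensional percolation with random range (equivalently, the APRR model with $q=0$, restricted to the line through the origin in direction $\vec e_1$). Let $\mathbf N=(N_i)_{i\in\mathbb{Z}}$ be i.i.d. with law $N$, and let $G_{\mathbf N}$ be the oriented graph on $\mathbb{Z}$ with bonds $\{(i,i+n): i\in\mathbb{Z},\ 1\le n\le N_i\}$. Given $p\in[0,1]$, each bond of $G_{\mathbf N}$ is open independently with probability $p$. $(0\to\infty)$ is the event that $0$ is connected by oriented open paths to infinitely many vertices, and $\theta(p,0)=P(0\to\infty)$. *)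

(* Defs.v *)
From HB Require Import structures.
From mathcomp Require Import all_boot all_order all_algebra.
From mathcomp Require Import all_classical all_reals all_analysis.
Set Implicit Arguments. Unset Strict Implicit. Unset Printing Implicit Defensive.
Import Order.TTheory GRing.Theory Num.Theory.
Local Open Scope classical_set_scope.
Local Open Scope ring_scope.

(* One-dimensional oriented percolation with random range at p = 1:
   every bond (i, i+n), 1 <= n <= N_i, of G_N is open. *)

Inductive reach (Nf : int -> nat) (x : int) : int -> Prop :=
| reach_refl : reach Nf x x
| reach_step (y : int) (n : nat) :
    reach Nf x y -> (1 <= n <= Nf y)%N -> reach Nf x (y + n%:Z).

Definition perc_to_infty (Nf : int -> nat) : Prop :=
  infinite_set [set y | reach Nf 0 y].

Definition mutually_independent_nat {d} {T : measurableType d} {R : realType}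
  (P : probability T R) (N : int -> T -> nat) : Prop :=
  forall (s : seq int) (A : int -> set nat), uniq s ->
    P (\bigcap_(i in [set` s]) (N i @^-1` A i)) =
    (\prod_(i <- s) P (N i @^-1` A i))%E.

(* Main.v *)
Require Import Defs.
From HB Require Import structures.
From mathcomp Require Import all_boot all_order all_algebra.
From mathcomp Require Import all_classical all_reals all_analysis.
From mathcomp Require Import zify ring lra.
Set Implicit Arguments. Unset Strict Implicit. Unset Printing Implicit Defensive.
Import Order.TTheory GRing.Theory Num.Theory.
Local Open Scope classical_set_scope.
Local Open Scope ring_scope.

Definition noE (f : int -> nat) (s : int) (m : nat) :=
  exists2 k : nat, (k <= m)%N & (m < k + f (s + k%:Z)%R)%N.
Definition Ev (f : int -> nat) (s : int) (m : nat) :=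
  forall k : nat, (k <= m)%N -> (k + f (s + k%:Z)%R <= m)%N.
Definition Gl (f : int -> nat) (s : int) (L : nat) :=
  forall m, (m < L)%N -> noE f s m.

Lemma noE_Ev f s m : ~ noE f s m <-> Ev f s m.
Proof.
split.
- move=> H k km; rewrite leqNgt; apply/negP => hk; apply: H; by exists k.
- move=> H [k km]; have := H k km; rewrite leqNgt => /negP; done.
Qed.

Lemma reach_ge0 f y : reach f 0 y -> 0 <= y.
Proof. elim=> // y' n _ IH _; lia. Qed.

Lemma reach_Ev f m y : Ev f 0 m -> reach f 0 y -> y <= m%:Z.
Proof.
move=> He; elim=> [|y' n r IH /andP[_ hn]]; first lia.
have y0 := reach_ge0 r.
have [k yk] : exists k : nat, y' = k%:Z by exists `|y'|%N; lia.
subst y'; have km : (k <= m)%N by lia.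
have := He k km; rewrite add0r; lia.
Qed.

Lemma reach_all f : (forall m, noE f 0 m) -> forall k : nat, reach f 0 k%:Z.
Proof.
move=> H k0.
suff: forall K k, (k <= K)%N -> reach f 0 k%:Z by apply; exact: leqnn.
elim=> [|K IH] k kK.
  have -> : k = 0%N by lia.
  exact: reach_refl.
case: (leqP k K) => kK'; first exact: IH.
have -> : k = K.+1 by lia.
have [j jK hj] := H K.
have := reach_step (IH j jK) (n := (K.+1 - j)%N).
rewrite add0r in hj.
have -> : (j%:Z + (K.+1 - j)%N%:Z = K.+1%:Z)%R by lia.
apply; apply/andP; split; lia.
Qed.

Lemma perc_iff f : perc_to_infty f <-> forall m, noE f 0 m.
Proof.
split.
- move=> Hp m; case: (pselect (noE f 0 m)) => // /noE_Ev He; exfalso.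
  apply: Hp; apply: (sub_finite_set _ (finite_image (fun k : nat => k%:Z) (finite_II m.+1))).
  move=> y /= ry; have y0 := reach_ge0 ry; have ym := reach_Ev He ry.
  exists `|y|%N; rewrite /=; lia.
- move=> H fin; apply: infinite_nat.
  have := finite_preimage (f := fun k : nat => k%:Z) _ fin.
  have -> : (fun k : nat => k%:Z) @^-1` [set y | reach f 0 y] = [set: nat].
    by apply/seteqP; split => // k _; exact: reach_all.
  apply; move=> a b _ _ /=; lia.
Qed.

Definition dep_on (s : seq int) (Q : (int -> nat) -> Prop) :=
  forall f g : int -> nat, (forall i, i \in s -> f i = g i) -> Q f -> Q g.

Definition upd (f : int -> nat) (i : int) (v : nat) : int -> nat :=
  fun j => if j == i then v else f j.

Section Indep.
Variables (R : realType) (d : measure_display) (T : measurableType d)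
  (P : probability T R) (N : int -> T -> nat).
Hypothesis Nmeas : forall i n, measurable (N i @^-1` [set n]).
Hypothesis Nind : mutually_independent_nat P N.

Definition X (w : T) : int -> nat := fun i => N i w.

Lemma measN i (A : set nat) : measurable (N i @^-1` A).
Proof.
have -> : N i @^-1` A = \bigcup_(n in A) N i @^-1` [set n].
  by apply/seteqP; split => [w /= Aw|w [n An /= ->//]]; exists (N i w).
by apply: bigcup_measurable => n _; exact: Nmeas.
Qed.

Lemma dep_on_upd i s Q v : dep_on (i :: s) Q -> dep_on s (fun f => Q (upd f i v)).
Proof.
move=> dQ f g fg; apply: dQ => j; rewrite in_cons /upd => /orP[/eqP->|js].
  by rewrite eqxx.
by case: ifP => // _; exact: fg.
Qed.

Lemma decomp i s Q : dep_on (i :: s) Q ->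
  [set w | Q (X w)] = \bigcup_v (N i @^-1` [set v] `&` [set w | Q (upd (X w) i v)]).
Proof.
move=> dQ; apply/seteqP; split => [w /= Qw|w [v _ [/= <-]]].
- exists (N i w) => //; split => //=; apply: dQ Qw => j _.
  by rewrite /upd; case: eqP => // ->.
- move=> Qv; apply: dQ Qv => j _; rewrite /upd; case: eqP => // ->.
  done.
Qed.

Lemma cyl_meas s Q : dep_on s Q -> measurable [set w | Q (X w)].
Proof.
elim: s Q => [|i s IH] Q dQ.
  case: (pselect (Q (fun _ => 0%N))) => hQ.
    have -> : [set w | Q (X w)] = setT.
      by apply/seteqP; split => // w _; apply: dQ hQ.
    exact: measurableT.
  have -> : [set w | Q (X w)] = set0.
    by apply/seteqP; split => // w /= /(dQ _ (fun _ => 0%N)) H; apply: hQ; apply: H.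
  exact: measurable0.
rewrite (decomp dQ); apply: bigcup_measurable => v _; apply: measurableI.
  exact: Nmeas.
exact: (IH (fun f => Q (upd f i v)) (@dep_on_upd i s Q v dQ)).
Qed.


Lemma finP (A : set T) : measurable A -> P A \is a fin_num.
Proof. move=> mA; exact: fin_num_measure. Qed.

Lemma prod_fin t (A : int -> set nat) :
  (\prod_(i <- t) P (N i @^-1` A i))%E \is a fin_num.
Proof.
elim: t => [|j t IH]; first by rewrite big_nil.
by rewrite big_cons fin_numM// finP//; exact: measN.
Qed.

Lemma cap_cons j t (A : int -> set nat) :
  \bigcap_(k in [set` j :: t]) N k @^-1` A k =
  N j @^-1` A j `&` \bigcap_(k in [set` t]) N k @^-1` A k.
Proof.
apply/seteqP; split => [w /= H|w /= [Hj Ht] k].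
  split; first by apply: H; rewrite /= in_cons eqxx.
  by move=> k kt; apply: H; rewrite /= in_cons kt orbT.
by rewrite /= in_cons => /orP[/eqP->//|kt]; exact: Ht.
Qed.

Lemma meas_cap (t : seq int) (A : int -> set nat) :
  measurable (\bigcap_(k in [set` t]) N k @^-1` A k).
Proof.
elim: t => [|j t IH]; first by rewrite set_nil bigcap_set0.
by rewrite cap_cons; apply: measurableI => //; exact: measN.
Qed.

Lemma indep s Q : uniq s -> dep_on s Q -> forall t (A : int -> set nat), uniq t ->
  (forall i, i \in t -> i \notin s) ->
  P (\bigcap_(i in [set` t]) (N i @^-1` A i) `&` [set w | Q (X w)]) =
  ((\prod_(i <- t) P (N i @^-1` A i)) * P [set w | Q (X w)])%E.
Proof.
elim: s Q => [|i s IH] Q us dQ t A ut dis.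
  case: (pselect (Q (fun _ => 0%N))) => hQ.
    have -> : [set w | Q (X w)] = setT.
      by apply/seteqP; split => // w _; apply: dQ hQ.
    by rewrite setIT Nind // probability_setT mule1.
  have -> : [set w | Q (X w)] = set0.
    by apply/seteqP; split => // w /= /(dQ _ (fun _ => 0%N)) H; apply: hQ; apply: H.
  by rewrite setI0 measure0 mule0.
move: us => /andP[iS us'].
have key : forall t' (A' : int -> set nat), uniq t' -> i \notin t' ->
   (forall j, j \in t' -> j \notin s) ->
   P (\bigcap_(j in [set` t']) N j @^-1` A' j `&` [set w | Q (X w)]) =
   ((\prod_(j <- t') P (N j @^-1` A' j)) *
     \sum_(v <oo) (P (N i @^-1` [set v]) * P [set w | Q (upd (X w) i v)]))%E.
  move=> t' A' ut' it' dis'.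
  have mterm : forall v, measurable (\bigcap_(j in [set` t']) N j @^-1` A' j
    `&` (N i @^-1` [set v] `&` [set w | Q (upd (X w) i v)])).
    move=> v; apply: measurableI; first exact: meas_cap.
    apply: measurableI; first exact: Nmeas.
    exact: (cyl_meas (@dep_on_upd i s Q v dQ)).
  rewrite (decomp dQ) setI_bigcupr measure_semi_bigcup; first last.
  - by apply: bigcup_measurable => v _; exact: mterm.
  - move=> v1 v2 _ _ [w [[_ [/= h1 _]] [_ [/= h2 _]]]]; by rewrite -h1 -h2.
  - exact: mterm.
  have term : forall v, P (\bigcap_(j in [set` t']) N j @^-1` A' j
    `&` (N i @^-1` [set v] `&` [set w | Q (upd (X w) i v)])) =
    ((fine (\prod_(j <- t') P (N j @^-1` A' j)))%:E *
      (P (N i @^-1` [set v]) * P [set w | Q (upd (X w) i v)]))%E.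
    move=> v.
    pose A'' := fun j => if j == i then [set v] else A' j.
    have -> : \bigcap_(j in [set` t']) N j @^-1` A' j
      `&` (N i @^-1` [set v] `&` [set w | Q (upd (X w) i v)]) =
      \bigcap_(j in [set` i :: t']) N j @^-1` A'' j `&` [set w | Q (upd (X w) i v)].
      rewrite cap_cons setIA; congr (_ `&` _); rewrite setIC /A'' eqxx; congr (_ `&` _).
      apply: eq_bigcapr => j /= jt; case: eqP => // ji.
      by move: it'; rewrite -ji jt.
    rewrite (IH (fun f => Q (upd f i v)) us' (@dep_on_upd i s Q v dQ)); first last.
    - move=> j; rewrite in_cons => /orP[/eqP->//|]; exact: dis'.
    - by rewrite /= it'.
    rewrite big_cons /A'' eqxx fineK ?prod_fin //.
    rewrite (eq_big_seq (fun j => P (N j @^-1` A' j))); last first.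
      move=> j jt; case: eqP => // ji; by move: it'; rewrite -ji jt.
    by rewrite (muleC (P _)) muleA.
  rewrite (eq_eseriesr (fun v _ => term v)) nneseriesZl ?fineK ?prod_fin //.
  by move=> v _; apply: mule_ge0.
rewrite key //; first last.
- by move=> j jt; have := dis j jt; rewrite in_cons negb_or => /andP[].
- by apply/negP => it; have := dis i it; rewrite in_cons eqxx.
congr (_ * _)%E.
have := key [::] (fun _ => setT) isT isT.
rewrite big_nil mul1e set_nil bigcap_set0 setTI => H; rewrite H //.
Qed.

End Indep.

Section Real.
Variable R : realType.

Definition HH (n : nat) : R := \sum_(j < n) (j.+1%:R)^-1.
Definition aa (b : R) (n : nat) : R := \prod_(j < n.+1) expR (- (b / j.+1%:R)).

Lemma HH_unbounded (M : R) : exists n, M < HH n.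
Proof.
apply/not_existsP => H; apply: (@dvg_harmonic R).
apply: nondecreasing_is_cvgn.
  apply/nondecreasing_seqP => n; rewrite /series /= big_nat_recr//= lerDl.
  exact: harmonic_ge0.
exists M => _ [n _ <-]; rewrite /series /= big_mkord.
by rewrite leNgt; apply/negP => h; apply: (H n).
Qed.

Lemma aa_S b n : aa b n.+1 = aa b n * expR (- (b / n.+2%:R)).
Proof. by rewrite /aa big_ord_recr. Qed.

Lemma aa_gt0 b n : 0 < aa b n.
Proof. by rewrite /aa; apply: prodr_gt0 => j _; exact: expR_gt0. Qed.

Lemma aa_lb b n : 0 < b -> b <= 1 -> expR (- b) / n.+1%:R <= aa b n.
Proof.
move=> b0 b1; elim: n => [|n IH].
  by rewrite /aa big_ord1 /= !divr1.
rewrite aa_S.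
have h1 : (n.+1%:R / n.+2%:R : R) <= expR (- (b / n.+2%:R)).
  apply: le_trans (expR_ge1Dx _).
  have n2 : (0 : R) < n.+2%:R by rewrite ltr0n.
  rewrite -[X in _ <= X](@mulfK _ n.+2%:R) ?gt_eqF//.
  rewrite ler_pM2r ?invr_gt0 // mulrDl mul1r mulNr divfK ?gt_eqF//.
  rewrite -natr1 ; lra.
apply: le_trans (ler_pM _ _ IH h1); last first.
- by rewrite divr_ge0 // ltW // ltr0n.
- by rewrite divr_ge0 // ltW // expR_gt0.
by rewrite mulrA divfK ?pnatr_eq0.
Qed.


Lemma expRN_le (y : R) : 0 <= y -> expR (- y) <= (1 + y)^-1.
Proof.
move=> y0; rewrite expRN lef_pV2 ?posrE ?expR_gt0 //; last by lra.
exact: expR_ge1Dx.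
Qed.

Lemma aa_split (b : R) n : aa b n = aa 1 n * aa (b - 1) n.
Proof.
rewrite /aa -big_split /=; apply: eq_bigr => j _; rewrite -expRD; congr expR.
have : (j.+1%:R : R) != 0 by rewrite pnatr_eq0.
move=> h; field; by rewrite -natr1 addrC in h.
Qed.

Lemma aa1_ub n : aa 1 n <= (n.+2%:R)^-1.
Proof.
elim: n => [|n IH].
  rewrite /aa big_ord1 /= divr1; have := expRN_le (@ler01 R).
  by have -> : (1 + 1 : R) = 2%:R by [].
rewrite aa_S.
have h : expR (- (1 / n.+2%:R)) <= (n.+2%:R / n.+3%:R : R).
  apply: le_trans; first by apply: expRN_le; rewrite divr_ge0 // ler0n.
  have n2 : (0 : R) < n.+2%:R by rewrite ltr0n.
  have -> : (1 + 1 / n.+2%:R : R) = n.+3%:R / n.+2%:R.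
    have := ler0n R n; rewrite -[n.+3]addn1 natrD => hn; field.
    by rewrite gt_eqF //; lra.
  by rewrite invf_div.
apply: le_trans (ler_pM _ _ IH h) _.
- exact/ltW/aa_gt0.
- exact/ltW/expR_gt0.
by rewrite mulrA mulVf ?pnatr_eq0// mul1r.
Qed.


Lemma aa_diff (g : R) n : 0 < g -> aa g n * (g * expR (- g) / n.+2%:R) <= aa g n - aa g n.+1.
Proof.
move=> g0; rewrite aa_S -{2}(mulr1 (aa g n)) -mulrBr ler_pM2l ?aa_gt0 //.
set x := g / n.+2%:R.
have n2 : (0 : R) < n.+2%:R by rewrite ltr0n.
have x0 : 0 <= x by rewrite divr_ge0 // ltW.
have xg : x <= g.
  rewrite /x ler_pdivrMr // ler_peMr ?(ltW g0) // ler1n //.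
have e1 : expR (- g) <= expR (- x) by rewrite ler_expR lerN2.
have e2 := expR_ge1Dx x.
have e3 : expR x * expR (- x) = 1 by rewrite -expRD subrr expR0.
have e4 := expR_gt0 (- x).
have e5 := expR_gt0 (- g).
have -> : g * expR (- g) / n.+2%:R = x * expR (- g).
  by rewrite /x mulrAC.
nra.
Qed.

Lemma aa_ub (b : R) n : 1 < b ->
  aa b n * ((b - 1) * expR (- (b - 1))) <= aa (b - 1) n - aa (b - 1) n.+1.
Proof.
move=> b1; apply: le_trans (aa_diff n _); last by lra.
rewrite aa_split -mulrA mulrA [_ * (_ / _)]mulrC.
have H := aa1_ub n.
have hac : 0 < aa (b - 1) n * ((b - 1) * expR (- (b - 1))).
  by rewrite mulr_gt0 ?aa_gt0 // mulr_gt0 ?subr_gt0 ?expR_gt0.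
move: H hac; set a1 := aa 1 n; set a := aa (b - 1) n.
set e := ((b - 1) * expR (- (b - 1))); set ki := n.+2%:R^-1.
move=> H hac.
have H2 : a1 * (a * e) <= ki * (a * e) by rewrite ler_pM2r.
have -> : e / n.+2%:R * a = ki * (a * e) by rewrite /ki; ring.
by rewrite mulrA in H2.
Qed.

Lemma aa_sum_ub (b : R) K M : 1 < b -> (K <= M)%N ->
  (\sum_(K <= n < M) aa b n) * ((b - 1) * expR (- (b - 1))) <= aa (b - 1) K.
Proof.
move=> b1 KM; rewrite mulr_suml.
apply: le_trans (ler_sum _ (fun n _ => aa_ub n b1)) _.
rewrite (@telescope_sumr_eq _ _ _ (fun n => - aa (b - 1) n)) //; last first.
  by move=> k _; rewrite opprK addrC.
have := aa_gt0 (b - 1) M; lra.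
Qed.

Lemma aa_HH (g : R) K : 0 <= g -> aa g K <= (1 + g * HH K.+1)^-1.
Proof.
move=> g0; have -> : aa g K = expR (- (g * HH K.+1)).
  rewrite /aa -expR_sum /HH mulr_sumr -sumrN; congr expR.
by apply: expRN_le; rewrite mulr_ge0 // sumr_ge0 // => j _; rewrite invr_ge0.
Qed.

End Real.

Definition evt (s : int) (m : nat) := [seq s + k%:Z | k <- iota 0 m.+1].
Definition evA (s : int) (m : nat) := fun j : int => [set x : nat | (x%:Z + j <= s + m%:Z)%R].
Definition glt (s : int) (L : nat) := [seq s + k%:Z | k <- iota 0 L].

Lemma dep_Ev s m : dep_on (evt s m) (fun f => Ev f s m).
Proof.
move=> f g fg H k km; rewrite -fg; first exact: H.
by rewrite /evt /glt; apply: (map_f (fun k : nat => s + k%:Z)); rewrite mem_iota; lia.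
Qed.

Lemma dep_Gl s L : dep_on (glt s L) (fun f => Gl f s L).
Proof.
move=> f g fg H m mL; have [k km hk] := H m mL; exists k => //; rewrite -fg //.
by rewrite /evt /glt; apply: (map_f (fun k : nat => s + k%:Z)); rewrite mem_iota; lia.
Qed.

Lemma uniq_shift (s : int) a L : uniq [seq s + k%:Z | k <- iota a L].
Proof. by rewrite map_inj_uniq ?iota_uniq // => x y /=; lia. Qed.

Lemma Ev_join f s m m' : Ev f s m -> Ev f (s + m.+1%:Z) m' -> Ev f s (m + m'.+1).
Proof.
move=> H1 H2 k km.
case: (leqP k m) => hk; first by have := H1 k hk; lia.
have := H2 (k - m.+1)%N ltac:(lia).
have -> : (s + m.+1%:Z + (k - m.+1)%N%:Z = s + k%:Z)%R by lia.
lia.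
Qed.

Lemma cover f s L : Gl f s L \/ exists2 m, (m < L)%N & (Ev f s m /\ Gl f (s + m.+1%:Z) (L - m.+1)).
Proof.
case: (pselect (Gl f s L)) => hG; [by left|right].
pose Pb := fun m => ((m < L)%N && `[< Ev f s m >]).
have exP : exists i, Pb i.
  apply/not_existsP => hn; apply: hG => m mL.
  case: (pselect (noE f s m)) => // /noE_Ev he; exfalso; apply: (hn m).
  by rewrite /Pb mL; apply/asboolP.
have ubP : forall i, Pb i -> (i <= L)%N by move=> i /andP[/ltnW].
case: (ex_maxnP exP ubP) => m /andP[mL /asboolP Em] maxm.
exists m => //; split => // m' m'L.
case: (pselect (noE f (s + m.+1%:Z) m')) => // /noE_Ev he; exfalso.
have P1 : Pb (m + m'.+1)%N.
  by rewrite /Pb; apply/andP; split; [lia | apply/asboolP; exact: Ev_join].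
have := maxm _ P1; lia.
Qed.

Lemma disj_GD f s L m : Gl f s L -> Ev f s m -> (m < L)%N -> False.
Proof. by move=> H he mL; have := H m mL; apply/noE_Ev. Qed.

Lemma disj_DD f s L m1 m2 : (m1 < m2)%N -> Gl f (s + m1.+1%:Z) (L - m1.+1) ->
  Ev f s m2 -> (m2 < L)%N -> False.
Proof.
move=> m12 HG HE m2L.
have [k kj hk] := HG (m2 - m1.+1)%N ltac:(lia).
have := HE (m1.+1 + k)%N ltac:(lia).
have -> : (s + (m1.+1 + k)%N%:Z = s + m1.+1%:Z + k%:Z)%R by lia.
lia.
Qed.

Section Main.
Variables (R : realType) (d : measure_display) (T : measurableType d)
  (P : probability T R) (N : int -> T -> nat) (beta : R).
Hypothesis beta0 : 0 < beta.
Hypothesis Nmeas : forall i n, measurable (N i @^-1` [set n]).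
Hypothesis Nind : mutually_independent_nat P N.
Hypothesis Hlaw : forall (i : int) (n : nat), (1 <= n)%N ->
     P [set w | (n <= N i w)%N] = (1 - expR (- (beta / n%:R)))%:E.

Lemma le_law i v : P (N i @^-1` [set x | (x <= v)%N]) = (expR (- (beta / v.+1%:R)))%:E.
Proof.
have -> : N i @^-1` [set x | (x <= v)%N] = ~` [set w | (v.+1 <= N i w)%N].
  by apply/seteqP; split => w /=; lia.
rewrite probability_setC; last exact: (measN Nmeas i [set x | (v.+1 <= x)%N]).
by rewrite Hlaw // -EFinB; congr EFin; lra.
Qed.

Lemma Ev_cap s m : [set w | Ev (X N w) s m] =
  \bigcap_(j in [set` evt s m]) N j @^-1` evA s m j.
Proof.
apply/seteqP; split => [w /= Hw j /= /mapP[k]|w /= H k km].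
  rewrite mem_iota => kk ->; have := Hw k; rewrite /X /evA /=; lia.
have : ((N (s + k%:Z) w)%:Z + (s + k%:Z) <= s + m%:Z)%R.
  apply: (H (s + k%:Z)); rewrite /= /evt.
  apply: (map_f (fun k : nat => s + k%:Z)); rewrite mem_iota; lia.
rewrite /X; lia.
Qed.

Lemma P_Ev s m : P [set w | Ev (X N w) s m] = (aa beta m)%:E.
Proof.
rewrite Ev_cap Nind; last exact: uniq_shift.
rewrite /evt big_map.
rewrite (eq_big_seq (fun k => (expR (- (beta / (m - k).+1%:R)))%:E)); last first.
  move=> k; rewrite mem_iota => kk; rewrite -(le_law (s + k%:Z)); congr (P _).
  by apply/seteqP; split => w /=; rewrite /evA /=; lia.
rewrite prodEFin; congr EFin; rewrite /aa.
rewrite -(big_mkord xpredT (fun j => expR (- (beta / j.+1%:R)))).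
change (\prod_(0 <= k < m.+1) expR (- (beta / (m - k).+1%:R)) =
  \prod_(0 <= j < m.+1) expR (- (beta / j.+1%:R))).
rewrite big_nat_rev; apply: eq_big_nat => i im.
by rewrite add0n; congr (expR (- (beta / _%:R))); lia.
Qed.


Definition Gset s L := [set w | Gl (X N w) s L].
Definition Eset s m := [set w | Ev (X N w) s m].
Definition Dset s L m := Eset s m `&` Gset (s + m.+1%:Z) (L - m.+1).

Lemma mG s L : measurable (Gset s L).
Proof. exact: (cyl_meas Nmeas (@dep_Gl s L)). Qed.

Lemma mE s m : measurable (Eset s m).
Proof. exact: (cyl_meas Nmeas (@dep_Ev s m)). Qed.

Lemma mD s L m : measurable (Dset s L m).
Proof. by apply: measurableI; [exact: mE | exact: mG]. Qed.

Lemma P_D s L m : P (Dset s L m) = ((aa beta m)%:E * P (Gset (s + m.+1%:Z) (L - m.+1)))%E.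
Proof.
rewrite /Dset /Eset Ev_cap /Gset.
rewrite (indep Nmeas Nind (@uniq_shift (s + m.+1%:Z) 0 (L - m.+1)) (@dep_Gl _ _)); last first.
- move=> i /mapP[k]; rewrite mem_iota => km ->; apply/negP => /mapP[k'].
  rewrite mem_iota => _; lia.
- exact: uniq_shift.
by rewrite -Nind ?uniq_shift // -Ev_cap P_Ev.
Qed.

Lemma renewal s L : (P (Gset s L) +
  \sum_(m < L) (aa beta m)%:E * P (Gset (s + m.+1%:Z) (L - m.+1)) = 1)%E.
Proof.
pose F i := if (i < L)%N then Dset s L i else set0.
have mF : forall i, measurable (F i).
  by move=> i; rewrite /F; case: ifP => _; [exact: mD | exact: measurable0].
have tF : trivIset setT F.
  move=> i j _ _; rewrite /F; case: ifP => iL; last by rewrite set0I => -[].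
  case: ifP => jL; last by rewrite setI0 => -[].
  move=> [w [[Ei Gi] [Ej Gj]]].
  case: (ltngtP i j) => // ij; exfalso.
  - exact: (disj_DD ij Gi Ej jL).
  - exact: (disj_DD ij Gj Ei iL).
have U : setT = Gset s L `|` \big[setU/set0]_(m < L) F m.
  apply/seteqP; split => // w _; case: (cover (X N w) s L) => [h|[m mL hm]].
    by left.
  right; rewrite -bigcup_mkord; exists m => //; rewrite /F mL; exact: hm.
rewrite -(probability_setT P) U measureU; first last.
- apply/seteqP; split => // w [Gw]; rewrite -bigcup_mkord => -[m /= mL].
  rewrite /F mL => -[Ew _]; exact: (disj_GD Gw Ew mL).
- by apply: bigsetU_measurable => i _.
- exact: mG.
rewrite measure_bigsetU //; congr (_ + _)%E; apply: eq_bigr => m _; apply/esym.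
rewrite /F ltn_ord; exact: (P_D s L m).
Qed.


Lemma PG_fin s L : P (Gset s L) \is a fin_num.
Proof. exact: fin_num_measure (mG s L). Qed.

Lemma sum_fin s L : (\sum_(m < L) (aa beta m)%:E * P (Gset (s + m.+1%:Z) (L - m.+1)))%E
  \is a fin_num.
Proof.
apply: (big_ind (fun x => x \is a fin_num)) => //.
  by move=> x y hx hy; rewrite fin_numD hx hy.
by move=> m _; rewrite fin_numM // PG_fin.
Qed.

Lemma PG_shift L s : P (Gset s L) = P (Gset 0 L).
Proof.
elim/ltn_ind: L s => L IH s.
have S_eq : (\sum_(m < L) (aa beta m)%:E * P (Gset (s + m.+1%:Z) (L - m.+1)) =
   \sum_(m < L) (aa beta m)%:E * P (Gset (0 + m.+1%:Z) (L - m.+1)))%E.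
  apply: eq_bigr => m _; have mL := ltn_ord m.
  rewrite IH; last by lia.
  by rewrite [in RHS]IH //; lia.
have H1 := renewal s L; have H2 := renewal 0 L.
rewrite S_eq in H1.
by rewrite -[LHS](addeK _ (sum_fin 0 L)) H1 -H2 addeK // sum_fin.
Qed.


Definition g L := fine (P (Gset 0 L)).

Lemma gE L : P (Gset 0 L) = (g L)%:E.
Proof. by rewrite /g fineK // PG_fin. Qed.

Lemma g_ge0 L : 0 <= g L.
Proof. by rewrite /g fine_ge0 // measure_ge0. Qed.

Lemma g_anti L L' : (L' <= L)%N -> g L <= g L'.
Proof.
move=> LL; rewrite -lee_fin -!gE; apply: le_measure; rewrite ?inE; try exact: mG.
move=> w Gw m mL; apply: Gw; lia.
Qed.

Lemma g_id L : g L + \sum_(m < L) aa beta m * g (L - m.+1) = 1.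
Proof.
have := renewal 0 L; rewrite gE.
under eq_bigr => m _ do rewrite PG_shift gE -EFinM.
by rewrite sumEFin -EFinD => -[].
Qed.

Lemma g_ub L : beta <= 1 -> g L * (1 + expR (- beta) * HH R L) <= 1.
Proof.
move=> b1; rewrite -[X in _ <= X](g_id L) mulrDr mulr1 lerD2l.
rewrite /HH mulr_sumr mulr_sumr; apply: ler_sum => m _.
rewrite mulrC; apply: ler_pM.
- by rewrite divr_ge0 // ltW // expR_gt0.
- exact: g_ge0.
- exact: aa_lb.
- by apply: g_anti; lia.
Qed.


Definition percset := [set w | perc_to_infty (X N w)].

Lemma perc_cap : percset = \bigcap_L Gset 0 L.
Proof.
apply/seteqP; split => w /=.
  by move=> /perc_iff H L _ m mL; exact: H.
move=> H; apply/perc_iff => m; exact: (H m.+1 I m).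
Qed.

Lemma m_perc : measurable percset.
Proof. by rewrite perc_cap; apply: bigcapT_measurable => L; exact: mG. Qed.

Lemma part1 : beta < 1 -> P percset = 0%E.
Proof.
move=> b1.
have hf : P percset \is a fin_num by exact: fin_num_measure m_perc.
set r := fine (P percset).
have Pr : P percset = r%:E by rewrite /r fineK.
have r0 : 0 <= r by rewrite /r fine_ge0 // measure_ge0.
have rle : forall L, r <= g L.
  move=> L; rewrite -lee_fin -Pr -gE; apply: le_measure; rewrite ?inE.
  - exact: m_perc.
  - exact: mG.
  by rewrite perc_cap => w /(_ L I).
rewrite Pr; congr EFin; apply/eqP; rewrite eq_le r0 andbT leNgt; apply/negP => rpos.
have [L HL] := HH_unbounded (expR beta / r).
have := g_ub L (ltW b1); have := rle L.
have E1 : expR (- beta) * expR beta = 1 by rewrite -expRD addNr expR0.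
have E2 := expR_gt0 (- beta).
have HL' : expR beta < HH R L * r by rewrite -ltr_pdivrMr.
have g0 := g_ge0 L.
move: HL' E1 E2 g0; set H := HH R L; set e1 := expR (- beta); set e2 := expR beta.
set gl := g L => HL' E1 E2 g0 h1 h2.
have e2p : 0 < e2 by exact: expR_gt0.
have Hp : 0 < H by nra.
have h3 : gl * (e1 * H) >= r * (e1 * H).
  by rewrite ler_pM2r // mulr_gt0.
nra.
Qed.


Definition B0 K := N 0 @^-1` [set x | (K < x)%N].

Lemma P_B0 K : P (B0 K) = (1 - expR (- (beta / K.+1%:R)))%:E.
Proof. exact: (Hlaw 0 (isT : (0 < K.+1)%N)). Qed.

Lemma P_F K n : P (B0 K `&` Eset 1 n) = (P (B0 K) * (aa beta n)%:E)%E.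
Proof.
have -> : B0 K = \bigcap_(j in [set` [:: (0 : int)]]) N j @^-1` (fun _ => [set x | (K < x)%N]) j.
  by rewrite set_cons1 bigcap_set1.
rewrite /Eset (indep Nmeas Nind (@uniq_shift 1 0 n.+1) (@dep_Ev 1 n)) //; last first.
  move=> i; rewrite inE => /eqP ->; apply/negP => /mapP[k _]; lia.
by rewrite big_cons big_nil mule1 -(P_Ev 1 n) set_cons1 bigcap_set1.
Qed.

Lemma sum_shift K M : \sum_(0 <= i < M) aa beta (K + i) = \sum_(K <= n < K + M) aa beta n.
Proof.
elim: M => [|M IH]; first by rewrite !big_geq // addn0.
by rewrite big_nat_recr // IH addnS big_nat_recr //= leq_addr.
Qed.


Lemma part2 : 1 < beta -> (0 < P percset)%E.
Proof.
move=> b1.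
set gam := beta - 1.
have gam0 : 0 < gam by rewrite /gam subr_gt0.
set c0 := gam * expR (- gam).
have c00 : 0 < c0 by rewrite mulr_gt0 // expR_gt0.
have [K HK0] := HH_unbounded (c0^-1 / gam).
have HKK : HH R K <= HH R K.+1.
  by rewrite /HH big_ord_recr /= lerDl invr_ge0.
have HK : aa gam K < c0.
  apply: le_lt_trans (aa_HH K (ltW gam0)) _.
  rewrite -[X in _ < X]invrK ltf_pV2 ?posrE ?invr_gt0 //; last first.
    by rewrite addr_gt0 // mulr_gt0 // (lt_le_trans _ HKK) // (le_lt_trans _ HK0) //
      divr_ge0 // ltW // invr_gt0.
  move: HK0; rewrite ltr_pdivrMr // => HK0.
  have : c0^-1 < gam * HH R K.+1 by rewrite mulrC (lt_le_trans HK0) // ler_pM2r.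
  lra.
set th := aa gam K / c0.
have th1 : th < 1 by rewrite /th ltr_pdivrMr // mul1r.
have th0 : 0 <= th by rewrite /th divr_ge0 // ltW // aa_gt0.
set pb := 1 - expR (- (beta / K.+1%:R)).
have pb0 : 0 < pb.
  by rewrite /pb subr_gt0 expR_lt1 oppr_lt0 divr_gt0 // ltr0n.
pose F n := B0 K `&` Eset 1 (K + n).
have mB0 : measurable (B0 K) by exact: measN.
have mF : forall n, measurable (F n) by move=> n; apply: measurableI => //; exact: mE.
pose U := \bigcup_n F n.
have mU : measurable U by exact: bigcupT_measurable.
have sub : B0 K `\` U `<=` percset.
  move=> w [B0w nU]; apply/perc_iff => m.
  case: (leqP m K) => mK.
    by exists 0%N => //; rewrite add0n addr0; move: B0w; rewrite /B0 /X /=; lia.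
  have nE : ~ Ev (X N w) 1 (K + (m - K.+1)).
    by move=> he; apply: nU; exists (m - K.+1)%N.
  have := nE; rewrite -noE_Ev => /contrapT [k km hk].
  exists k.+1; first by lia.
  have -> : (0 + k.+1%:Z = 1 + k%:Z)%R by lia.
  have e : (m = (K + (m - K.+1)).+1)%N by lia.
  by rewrite [X in (X < _)%N]e addSn ltnS.
have PU : (P U <= (pb * th)%:E)%E.
  apply: le_trans (measure_sigma_subadditive P mF mU (fun x h => h)) _.
  have -> : (\sum_(n <oo) P (F n) = \sum_(n <oo) (pb * aa beta (K + n))%:E)%E.
    by apply: eq_eseriesr => n _; rewrite /F P_F P_B0.
  apply: lime_le; first by apply: is_cvg_nneseries => n _ _; rewrite lee_fin mulr_ge0 // ?(ltW pb0) // ltW // aa_gt0.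
  apply: nearW => M; rewrite sumEFin lee_fin -mulr_sumr ler_pM2l // sum_shift.
  by rewrite /th ler_pdivlMr //; exact: (aa_sum_ub b1 (leq_addr M K)).
have PUf : P U \is a fin_num by exact: fin_num_measure.
have eqD : P (B0 K `\` U) = (P (B0 K) - P U)%E.
  rewrite measureD // ?ltey_eq ?fin_num_measure //.
  by rewrite setIidr //; move=> w [n _ []].
have pos : (0 < P (B0 K `\` U))%E.
  rewrite eqD P_B0 -(fineK PUf) -EFinB lte_fin.
  have : fine (P U) <= pb * th by rewrite -lee_fin fineK.
  rewrite -/pb; nra.
apply: (lt_le_trans pos); apply: le_measure => //; rewrite inE.
- exact: measurableD.
- exact: m_perc.
Qed.

End Main.

Unset Implicit Arguments. Set Strict Implicit.

Theorem theorem5 (R : realType) (d : measure_display) (T : measurableType d)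
  (P : probability T R) (N : int -> T -> nat) (beta : R) :
  0 < beta ->
  (forall (i : int) (n : nat), measurable (N i @^-1` [set n])) ->
  mutually_independent_nat P N ->
  (forall (i : int) (n : nat), (1 <= n)%N ->
     P [set w | (n <= N i w)%N] = (1 - expR (- (beta / n%:R)))%:E) ->
  (beta < 1 -> P [set w | perc_to_infty (fun i => N i w)] = 0%E) /\
  (1 < beta -> (0 < P [set w | perc_to_infty (fun i => N i w)])%E).
Proof.
move=> b0 Nm Ni Hl; split => b1.
- exact: (part1 b0 Nm Ni Hl b1).
- exact: (part2 b0 Nm Ni Hl b1).
Qed.
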